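(* Let $n \geq 2$ be a natural number. The following conditions are equivalent: (a) $\lfloor \sqrt{2}\,n \rfloor$ is even. (b) $\left\{ \frac{n}{\sqrt{2}} \right\} \leq \frac{1}{2}$. (c) $\left\{ \frac{n}{\sqrt{2}} \right\} < \frac{1}{2}$. (d) $\left\lfloor \sqrt{2}\,n \left\lfloor \frac{n}{\sqrt{2}} \right\rfloor \right\rfloor = \left\lfloor \frac{n}{\sqrt{2}} \lfloor \sqrt{2}\,n \rfloor \right\rfloor$. (e) $\left\lfloor \frac{n}{\sqrt{2}} \right\rfloor = \left\lfloor \sqrt{ n^2 - \left\lfloor \frac{n}{\sqrt{2}} \right\rfloor^2 } \right\rfloor$. (f) $\left\{ \frac{n}{\sqrt{2}} \right\} < \sqrt{ \left\lfloor \frac{n}{\sqrt{2}} \right\rfloor^2 + \left\lfloor \frac{n}{\sqrt{2}} \right\rfloor + \frac{1}{2} } - \left\lfloor \frac{n}{\sqrt{2}} \right\rfloor$.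
   Context: $\lfloor x \rfloor$ denotes the floor of a real number $x$ and $\{x\} = x - \lfloor x \rfloor$ denotes its fractional part. *)

(* Defs.v *)
From Stdlib Require Export Reals ZArith.
Open Scope R_scope.

(* floor of a real number, as an integer: Int_part x = up x - 1 is the floor *)
Definition floorZ (x : R) : Z := Int_part x.
Definition floorR (x : R) : R := IZR (floorZ x).
Definition fracR (x : R) : R := x - floorR x.

(* Main.v *)
Require Import Defs.
From Stdlib Require Import Reals ZArith.
From Stdlib Require Import Lra Lia Psatz.
Open Scope R_scope.

Lemma fl_spec y : IZR (floorZ y) <= y < IZR (floorZ y) + 1.
Proof. unfold floorZ. destruct (base_Int_part y). lra. Qed.

Lemma fl_unique y k : IZR k <= y < IZR k + 1 -> floorZ y = k.
Proof. intros H. unfold floorZ. symmetry. apply Int_part_spec. lra. Qed.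

Lemma sqrt_ge a y : 0 <= a -> a ^ 2 <= y -> a <= sqrt y.
Proof. intros H1 H2. rewrite <- (sqrt_pow2 a H1). apply sqrt_le_1_alt. lra. Qed.

Lemma sqrt_lt a y : 0 <= a -> 0 <= y -> y < a ^ 2 -> sqrt y < a.
Proof. intros H1 H0 H2. rewrite <- (sqrt_pow2 a H1). apply sqrt_lt_1_alt. lra. Qed.

Lemma sqrt_gt a y : 0 <= a -> a ^ 2 < y -> a < sqrt y.
Proof. intros H1 H2. rewrite <- (sqrt_pow2 a H1). apply sqrt_lt_1_alt. split; [nra|lra]. Qed.

Theorem theorem1 (n : nat) (hn : (2 <= n)%nat) :
  let N := INR n in
  let a := Z.even (floorZ (sqrt 2 * N)) = true in
  let b := fracR (N / sqrt 2) <= 1 / 2 in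
  let c := fracR (N / sqrt 2) < 1 / 2 in
  let d := floorR (sqrt 2 * N * floorR (N / sqrt 2))
           = floorR (N / sqrt 2 * floorR (sqrt 2 * N)) in
  let e := floorR (N / sqrt 2)
           = floorR (sqrt (N ^ 2 - floorR (N / sqrt 2) ^ 2)) in
  let f := fracR (N / sqrt 2)
           < sqrt (floorR (N / sqrt 2) ^ 2 + floorR (N / sqrt 2) + 1 / 2)
             - floorR (N / sqrt 2) in
  (a <-> b) /\ (a <-> c) /\ (a <-> d) /\ (a <-> e) /\ (a <-> f).
Proof.
  intros N a b c d e f; unfold a, b, c, d, e, f, fracR, floorR; clear a b c d e f.
  set (z := Z.of_nat n).
  assert (HN : N = IZR z) by (unfold N, z; apply INR_IZR_INZ).
  assert (Hz : (2 <= z)%Z) by (unfold z; lia).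
  assert (HN2 : 2 <= N) by (rewrite HN; apply IZR_le; lia).
  assert (Hs : sqrt 2 * sqrt 2 = 2) by (apply sqrt_sqrt; lra).
  assert (Hs0 : 0 < sqrt 2) by (apply sqrt_lt_R0; lra).
  set (x := N / sqrt 2).
  assert (H2x : sqrt 2 * N = 2 * x) by (unfold x; set (s := sqrt 2) in *; rewrite <- Hs; field; lra).
  assert (Hxx : 2 * (x * x) = N * N) by (unfold x; set (s := sqrt 2) in *; rewrite <- Hs; field; lra).
  assert (Hx0 : 0 < x) by (unfold x; apply Rdiv_lt_0_compat; lra).
  assert (Hx1 : 1 <= x) by nra.
  rewrite H2x.
  set (m := floorZ x).
  destruct (fl_spec x) as [Hm1 Hm2]; fold m in Hm1, Hm2.
  assert (Hm0 : (0 <= m)%Z) by (assert (-1 < m)%Z by (apply lt_IZR; lra); lia).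
  assert (Hm0' : 0 <= IZR m) by (apply IZR_le; lia).
  set (t := x - IZR m).
  assert (Ht : t <> 1/2).
  { intro E. assert (Ex : x = IZR m + 1/2) by (unfold t in E; lra).
    rewrite Ex, HN in Hxx.
    assert (E2 : IZR (2 * (z*z)) = IZR ((2*m+1)*(2*m+1))).
    { rewrite !mult_IZR, plus_IZR, mult_IZR. simpl. nra. }
    apply eq_IZR in E2. nia. }
  assert (HNsq : N ^ 2 = IZR (z*z)) by (rewrite HN, mult_IZR; ring).
  destruct (Rlt_or_le t (1/2)) as [Hlt | Hge].
  - assert (F2 : floorZ (2 * x) = (2 * m)%Z).
    { apply fl_unique. rewrite mult_IZR. unfold t in Hlt. lra. }
    rewrite F2.
    assert (Ev : Z.even (2 * m) = true) by (rewrite Z.even_mul; reflexivity).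
    repeat split; intros; try lra; try assumption.
    + f_equal. f_equal. rewrite mult_IZR. ring.
    + f_equal. symmetry. apply fl_unique. split.
      * apply sqrt_ge; [lra|]. unfold t in Hlt. nra.
      * apply sqrt_lt; [lra| nra |]. unfold t in Hlt. nra.
    + assert (IZR m + t < sqrt (IZR m ^ 2 + IZR m + 1 / 2)); [|lra].
      apply sqrt_gt; [unfold t; lra |]. unfold t in *. nra.
  - assert (Hgt : 1/2 < t) by lra. clear Hge.
    assert (F2 : floorZ (2 * x) = (2 * m + 1)%Z).
    { apply fl_unique. rewrite plus_IZR, mult_IZR. unfold t in Hgt. lra. }
    rewrite F2.
    assert (Ev : Z.even (2 * m + 1) = false) by (rewrite Z.even_add, Z.even_mul; reflexivity).
    rewrite Ev.
    (* integrality *)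
    assert (Hint : IZR (2*m*m + 2*m + 1) <= N ^ 2).
    { rewrite HNsq. apply IZR_le.
      assert (2*m*m+2*m < z*z)%Z; [|lia].
      apply lt_IZR. rewrite <- HNsq. rewrite !plus_IZR, !mult_IZR. unfold t in Hgt. nra. }
    rewrite !plus_IZR, !mult_IZR in Hint.
    repeat split; intros H; try discriminate; try lra; exfalso.
    + apply eq_IZR in H.
      destruct (fl_spec (2 * x * IZR m)) as [A1 A2].
      rewrite plus_IZR, mult_IZR in H. destruct (fl_spec (x * (2 * IZR m + 1))) as [B1 B2].
      rewrite H in A1, A2. assert (x * (2 * IZR m + 1) = 2 * x * IZR m + x) by ring. lra.
    + apply eq_IZR in H.
      assert (IZR m + 1 <= sqrt (N ^ 2 - IZR m ^ 2)) by (apply sqrt_ge; nra).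
      destruct (fl_spec (sqrt (N ^ 2 - IZR m ^ 2))) as [A1 A2].
      rewrite <- H in A1, A2. lra.
    + assert (sqrt (IZR m ^ 2 + IZR m + 1 / 2) <= x); [|unfold t in H; lra].
      rewrite <- (sqrt_pow2 x) by lra. apply sqrt_le_1_alt. nra.
Qed.
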